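(* Let $n\ge 1$ and let $\pi=\pi_1\pi_2\cdots\pi_n\in S_n$ be a permutation of $\{1,\dots,n\}$ (so $\pi_i=\pi(i)$). Let $$M=\{\pi_j-i \;:\; 1\le i<j\le n,\ \pi_i>\pi_j\}$$ and let $m=\#M$ be the number of distinct elements of $M$. Then there exist at most $m$ permutations $\rho^1,\rho^2,\dots$ of bandwidth $1$ (i.e. $|\rho^j_i-i|\le 1$ for all $i$) such that $\pi=\rho^1\rho^2\cdots$ (product in $S_n$; when $m=0$, $\pi$ is the identity, the empty product).
   Context: A permutation $\rho\in S_n$ has bandwidth $w$ if $|\rho_i-i|\le w$ for all $i$; equivalently its permutation matrix $P$ (with $P_{i,\rho_i}=1$ and all other entries $0$) satisfies $P_{i,j}=0$ whenever $|i-j|>w$. *)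

(* Defs.v *)
(* Permutations of {1..n} are modelled as {perm 'I_n}
   (0-indexed: value k in 'I_n stands for k+1; differences are unchanged). *)
From HB Require Import structures.
From mathcomp Require Import all_boot all_order all_algebra all_fingroup.
Set Implicit Arguments. Unset Strict Implicit. Unset Printing Implicit Defensive.

Definition bandwidth (n w : nat) (rho : {perm 'I_n}) : bool :=
  [forall i : 'I_n, ((rho i : nat) - i <= w) && ((i : nat) - rho i <= w)]%N.

Definition Mset (n : nat) (pi : {perm 'I_n}) : seq int :=
  undup (map (fun p : 'I_n * 'I_n => ((pi p.2 : nat)%:Z - (p.1 : nat)%:Z)%R)
    (filter (fun p : 'I_n * 'I_n =>
               ((p.1 : nat) < p.2)%N && ((pi p.2 : nat) < pi p.1)%N)
            (enum [set: 'I_n * 'I_n]))).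

(* Main.v *)
Require Import Defs.
From mathcomp Require Import all_boot all_order all_algebra all_fingroup.
From Stdlib Require Import Lia.
Unset Printing Implicit Defensive.

Definition Bn (n k py px y x : nat) : bool :=
  if (y < x)%N then (py < px) || (y + n < k + px)
  else if (x < y)%N then (py < px) && ~~ (x + n < k + py) else false.

Ltac natcases :=
  repeat match goal with
  | |- context [ (?a < ?b)%N ] => case: (@ltP a b) => ?
  | |- context [ (?a == ?b :> nat) ] => case: (@eqP nat a b) => ?
  end.

Ltac bnsolve := rewrite /Bn -!plusE; natcases => //=; intros; exfalso; lia.

Lemma Bn_trans {n k x y z px py pz} :
  (x = y <-> px = py) -> (y = z <-> py = pz) -> (x = z <-> px = pz) ->
  Bn n k py px y x -> Bn n k pz py z y -> Bn n k pz px z x.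
Proof. move=> h1 h2 h3; move: h1 h2; bnsolve. Qed.

Lemma Bn_irr n k p x : Bn n k p p x x = false.
Proof. by rewrite /Bn ltnn. Qed.

Lemma Bn_total {n k x y px py} : x <> y -> (x = y <-> px = py) ->
  Bn n k py px y x || Bn n k px py x y.
Proof. move=> h1 h2; bnsolve. Qed.

Lemma Bn_step {n k x y px py} : (x = y <-> px = py) ->
  Bn n k.+1 py px y x ->
  Bn n k py px y x || [&& y < x, px < py & y + n == k + px].
Proof. move=> h; bnsolve. Qed.

Lemma Bn_step2 {n k x y px py} : (x = y <-> px = py) ->
  Bn n k py px y x ->
  Bn n k.+1 py px y x || [&& x < y, py < px & x + n == k + py].
Proof. move=> h; bnsolve. Qed.

Lemma Bn_zero n x y px py : (px < n)%N -> (py < n)%N -> (x = y <-> px = py) ->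
  Bn n 0 py px y x = (py < px)%N.
Proof. move=> h1 h2 h3; move: h1 h2; bnsolve. Qed.

Lemma Bn_top n x y px py : (x < n)%N -> (y < n)%N -> (x = y <-> px = py) ->
  Bn n (n + n) py px y x = (y < x)%N.
Proof. move=> h1 h2 h3; move: h1 h2; bnsolve. Qed.

Lemma card_ltord n m : (m <= n)%N -> #|[set i : 'I_n | (i < m)%N]| = m.
Proof.
move=> hm; rewrite -sum1_card.
rewrite (eq_bigl (fun i : 'I_n => (i < m)%N)); last by move=> i; rewrite inE.
by rewrite (big_ord_narrow hm) sum1_card card_ord.
Qed.

Definition B {n} (pi : {perm 'I_n}) k (y x : 'I_n) : bool :=
  Bn n k ((pi^-1)%g y) ((pi^-1)%g x) y x.

Lemma pinj {n} (pi : {perm 'I_n}) (x y : 'I_n) :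
  (x : nat) = y <-> ((pi^-1)%g x : nat) = (pi^-1)%g y.
Proof.
split=> h.
- by have -> : x = y by apply: val_inj.
- have h' : (pi^-1)%g x = (pi^-1)%g y by apply: val_inj.
  by rewrite (perm_inj h').
Qed.

Definition pos {n} (pi : {perm 'I_n}) k (x : 'I_n) := #|[set y | B pi k y x]|.

Lemma pos_lt {n} (pi : {perm 'I_n}) k x : (pos pi k x < n)%N.
Proof.
rewrite /pos -[X in (_ < X)%N](card_ord n) -cardsT; apply: proper_card.
apply/properP; split; first by apply/subsetP => y; rewrite inE.
by exists x; rewrite !inE // /B Bn_irr.
Qed.

Lemma pos_ltB {n} (pi : {perm 'I_n}) k x y : B pi k y x -> (pos pi k y < pos pi k x)%N.
Proof.
move=> hyx; apply: proper_card; apply/properP; split.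
  apply/subsetP => z; rewrite !inE => hzy.
  exact: (Bn_trans (pinj pi x y) (pinj pi y z) (pinj pi x z) hyx hzy).
by exists y; rewrite !inE // /B Bn_irr.
Qed.

Lemma tau_inj {n} (pi : {perm 'I_n}) k :
  injective (fun x : 'I_n => Ordinal (pos_lt pi k x)).
Proof.
move=> x y /(congr1 val) /= h; apply/eqP; apply/negPn/negP => hxy.
have hne : (y : nat) <> x by move=> e; move/eqP: hxy; apply; apply: val_inj.
case/orP: (@Bn_total n k y x _ _ hne (pinj pi y x)) => hb.
- by have := pos_ltB pi k y x hb; rewrite h ltnn.
- by have := pos_ltB pi k x y hb; rewrite h ltnn.
Qed.

Definition tau {n} (pi : {perm 'I_n}) k : {perm 'I_n} := perm (tau_inj pi k).

Lemma tauE {n} (pi : {perm 'I_n}) k x : (tau pi k x : nat) = pos pi k x.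
Proof. by rewrite /tau permE. Qed.

Lemma tau0 {n} (pi : {perm 'I_n}) : tau pi 0 = (pi^-1)%g.
Proof.
apply/permP => x; apply: val_inj; rewrite /= tauE /pos.
have -> : [set y | B pi 0 y x] = (pi^-1)%g @^-1: [set i : 'I_n | (i < (pi^-1)%g x)%N].
  apply/setP => y; rewrite !inE /B Bn_zero //; exact: pinj.
by rewrite card_preimset ?card_ltord //; [exact: ltnW | exact: perm_inj].
Qed.

Lemma tauN {n} (pi : {perm 'I_n}) : tau pi (n + n) = 1%g.
Proof.
apply/permP => x; apply: val_inj; rewrite /= tauE /pos perm1.
have -> : [set y | B pi (n + n) y x] = [set i : 'I_n | (i < x)%N].
  apply/setP => y; rewrite !inE /B Bn_top //; exact: pinj.
by rewrite card_ltord // ltnW.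
Qed.

Lemma pos_step1 {n} (pi : {perm 'I_n}) k x : (pos pi k.+1 x <= (pos pi k x).+1)%N.
Proof.
set G := [set y : 'I_n | [&& (y < x)%N, ((pi^-1)%g x < (pi^-1)%g y)%N &
                          (y + n == k + (pi^-1)%g x)%N]].
have hG : (#|G| <= 1)%N.
  apply/card_le1_eqP => a b; rewrite !inE => /and3P [_ _ /eqP ha] /and3P [_ _ /eqP hb].
  apply: val_inj; apply/eqP; rewrite -(eqn_add2r n) ha hb //.
rewrite /pos.
have hsub : [set y | B pi k.+1 y x] \subset [set y | B pi k y x] :|: G.
  apply/subsetP => y; rewrite !inE => h.
  exact: (Bn_step (pinj pi x y) h).
apply: leq_trans (subset_leq_card hsub) _.
apply: leq_trans (leq_card_setU _ _).1 _.
by rewrite -[X in (_ <= X)%N]addn1 leq_add2l.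
Qed.

Lemma pos_step2 {n} (pi : {perm 'I_n}) k x : (pos pi k x <= (pos pi k.+1 x).+1)%N.
Proof.
set G := [set y : 'I_n | [&& (x < y)%N, ((pi^-1)%g y < (pi^-1)%g x)%N &
                          (x + n == k + (pi^-1)%g y)%N]].
have hG : (#|G| <= 1)%N.
  apply/card_le1_eqP => a b; rewrite !inE => /and3P [_ _ /eqP ha] /and3P [_ _ /eqP hb].
  have e : (pi^-1)%g a = (pi^-1)%g b.
    by apply: val_inj; apply/eqP; rewrite -(eqn_add2l k) -ha -hb.
  exact: (esym (perm_inj e)).
rewrite /pos.
have hsub : [set y | B pi k y x] \subset [set y | B pi k.+1 y x] :|: G.
  apply/subsetP => y; rewrite !inE => h.
  exact: (Bn_step2 (pinj pi x y) h).
apply: leq_trans (subset_leq_card hsub) _.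
apply: leq_trans (leq_card_setU _ _).1 _.
by rewrite -[X in (_ <= X)%N]addn1 leq_add2l.
Qed.

Definition rho {n} (pi : {perm 'I_n}) k := ((tau pi k)^-1 * tau pi k.+1)%g.

Lemma rho_band {n} (pi : {perm 'I_n}) k : bandwidth 1 (rho pi k).
Proof.
apply/forallP => i.
have [x ->] : exists x, i = tau pi k x by exists ((tau pi k)^-1 i)%g; rewrite permKV.
rewrite /rho permM permK !tauE !leq_subLR !addn1.
by rewrite pos_step1 pos_step2.
Qed.

Definition inM {n} (pi : {perm 'I_n}) k : bool :=
  [exists i : 'I_n, exists j : 'I_n,
     [&& (i < j)%N, (pi j < pi i)%N & (pi j + n == k + i)%N]].

Lemma rho_id {n} (pi : {perm 'I_n}) k : ~~ inM pi k -> rho pi k = 1%g.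
Proof.
move=> hM.
suff e : tau pi k.+1 = tau pi k by rewrite /rho e mulVg.
apply/permP => x; apply: val_inj; rewrite /= !tauE /pos.
suff -> : [set y | B pi k.+1 y x] = [set y | B pi k y x] by [].

apply/setP => y; rewrite !inE; apply/idP/idP => h.
- case/orP: (Bn_step (pinj pi x y) h) => // /and3P [h1 h2 h3].
  case/negP: hM; apply/existsP; exists ((pi^-1)%g x); apply/existsP; exists ((pi^-1)%g y).
  by rewrite !permKV h1 h2 h3.
- case/orP: (Bn_step2 (pinj pi x y) h) => // /and3P [h1 h2 h3].
  case/negP: hM; apply/existsP; exists ((pi^-1)%g y); apply/existsP; exists ((pi^-1)%g x).
  by rewrite !permKV h1 h2 h3.
Qed.

Lemma inM_Mset {n} (pi : {perm 'I_n}) k : inM pi k -> (k%:Z - n%:Z)%R \in Mset pi.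
Proof.
case/existsP => i /existsP [j /and3P [h1 h2 /eqP h3]].
rewrite /Mset mem_undup; apply/mapP; exists (i, j).
  by rewrite mem_filter /= h1 h2 mem_enum inE.
rewrite /=; apply/eqP; rewrite GRing.subr_eq GRing.addrAC eq_sym GRing.subr_eq.
by rewrite -!PoszD h3 addnC.
Qed.

Lemma telescope {n} (pi : {perm 'I_n}) N :
  (\prod_(k <- iota 0 N) rho pi k)%g = ((tau pi 0)^-1 * tau pi N)%g.
Proof.
elim: N => [|N IH]; first by rewrite big_nil mulVg.
by rewrite -addn1 iotaD big_cat /= big_seq1 IH /rho mulgA mulgK addn1.
Qed.

Theorem theorem1p1 (n : nat) (hn : (0 < n)%N) (pi : {perm 'I_n}) :
  exists rhos : seq {perm 'I_n},
    [/\ (size rhos <= size (Mset pi))%N,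
        all (bandwidth 1) rhos &
        pi = (\prod_(r <- rhos) r)%g].
Proof.
exists [seq rho pi k | k <- iota 0 (n + n) & inM pi k]; split.
- rewrite size_map -(size_map (fun k : nat => (k%:Z - n%:Z)%R)).
  apply: uniq_leq_size.
    rewrite map_inj_uniq ?filter_uniq ?iota_uniq //.
    by move=> a b /GRing.addIr [].
  move=> z /mapP [k]; rewrite mem_filter => /andP [hk _] ->.
  exact: inM_Mset.
- by apply/allP => r /mapP [k _ ->]; apply: rho_band.
- rewrite big_map big_filter big_mkcond /=.
  rewrite (eq_bigr (rho pi)); last by move=> k _; case: ifP => // /negbT /rho_id ->.
  by rewrite telescope tau0 tauN invgK mulg1.
Qed.
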